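(* Let $\bm{C}\in\mathbb{R}^{n\times m}$ have i.i.d. entries $\bm{C}_{ij}\sim\mathrm{Unif}(0,1)$ (so that $\mathbb{P}(\mathrm{rk}(\bm{C})<\min\{n,m\})=0$), and let $\bm{a}\in\Delta_n$, $\bm{b}\in\Delta_m$ have strictly positive entries. Then, with probability one, the entrywise exponentials $\exp\{\bm{C}\}$ and $\exp\{-\bm{C}\}$ have full rank $\min\{n,m\}$, and the output $\mathrm{diag}(\bm{u})\,e^{-\bm{C}}\,\mathrm{diag}(\bm{v})$ of the Sinkhorn algorithm $\textit{Sinkhorn}(e^{-\bm{C}},\bm{a},\bm{b})$ has full rank $\min\{n,m\}$.
   Context: The Sinkhorn algorithm with kernel $\bm{K}\in\mathbb{R}_{>0}^{n\times m}$ and marginals $\bm{a},\bm{b}$ starts from $\bm{u}=\bm{1}_n$, $\bm{v}=\bm{1}_m$ and alternates the updates $\bm{u}\gets\bm{a}/(\bm{K}\bm{v})$, $\bm{v}\gets\bm{b}/(\bm{K}^{\mathrm T}\bm{u})$ (entrywise division), returning $\mathrm{diag}(\bm{u})\bm{K}\mathrm{diag}(\bm{v})$. $\Delta_d$ denotes the probability simplex in $\mathbb{R}^d$. *)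

(* Defs.v *)
From HB Require Import structures.
From mathcomp Require Import all_boot all_order all_algebra.
From mathcomp Require Import all_classical all_reals all_analysis.
Set Implicit Arguments. Unset Strict Implicit. Unset Printing Implicit Defensive.
Import Order.TTheory GRing.Theory Num.Theory.
Local Open Scope classical_set_scope.
Local Open Scope ring_scope.

Definition in_simplex (R : realType) (d : nat) (a : 'I_d -> R) : Prop :=
  (forall i, 0 <= a i) /\ \sum_(i < d) a i = 1.

Definition sinkhorn_step (R : realType) (n m : nat) (K : 'M[R]_(n, m))
  (a : 'I_n -> R) (b : 'I_m -> R) (uv : ('I_n -> R) * ('I_m -> R)) :
  ('I_n -> R) * ('I_m -> R) :=
  let u' := fun i => a i / \sum_(j < m) K i j * uv.2 j in
  let v' := fun j => b j / \sum_(i < n) K i j * u' i in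
  (u', v').

Definition sinkhorn_scalings (R : realType) (n m : nat) (K : 'M[R]_(n, m))
  (a : 'I_n -> R) (b : 'I_m -> R) (N : nat) : ('I_n -> R) * ('I_m -> R) :=
  iter N (sinkhorn_step K a b) (fun _ => 1, fun _ => 1).

Definition sinkhorn (R : realType) (n m : nat) (K : 'M[R]_(n, m))
  (a : 'I_n -> R) (b : 'I_m -> R) (N : nat) : 'M[R]_(n, m) :=
  let uv := sinkhorn_scalings K a b N in
  diag_mx (\row_i uv.1 i) *m K *m diag_mx (\row_j uv.2 j).

Definition mx_exp (R : realType) (n m : nat) (A : 'M[R]_(n, m)) : 'M[R]_(n, m) :=
  map_mx (@expR R) A.

(* mutual independence of a finite family of real random variables:
   product rule for every family of Borel sets (taking B = setT for unused
   indices gives the product rule for every subfamily). *)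
Definition mutually_independent (d : measure_display) (T : measurableType d)
  (R : realType) (P : probability T R) (I : finType) (X : I -> {RV P >-> R}) : Prop :=
  forall B : I -> set R, (forall i, measurable (B i)) ->
    P [set w | forall i, B i (X i w)] = (\prod_(i : I) fine (P (X i @^-1` B i)))%:E.

Definition uniform01 (d : measure_display) (T : measurableType d)
  (R : realType) (P : probability T R) (X : {RV P >-> R}) : Prop :=
  forall A : set R, measurable A ->
    distribution P X A = uniform_prob (@ltr01 R) A.

(* Main.v *)
Require Import Defs.
From HB Require Import structures.
From mathcomp Require Import all_boot all_order all_algebra.
From mathcomp Require Import all_classical all_reals all_analysis.
From mathcomp Require Import ring lra measurable_realfun.
Import Order.TTheory GRing.Theory Num.Theory.
Local Open Scope classical_set_scope.
Local Open Scope ring_scope.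


Section LA.
Context {R : realType}.

Lemma rank_sub_le n m p (f : 'I_p -> 'I_n) (g : 'I_p -> 'I_m) (A : 'M[R]_(n,m)) :
  (\rank (rowsub f (colsub g A)) <= \rank A)%N.
Proof.
rewrite rowsubE; apply: leq_trans (mxrankM_maxr _ _) _.
have -> : colsub g A = A *m colsub g 1%:M by rewrite mulmx_colsub mulmx1.
exact: mxrankM_maxl.
Qed.

Lemma diag_unit n (u : 'I_n -> R) : (forall i, u i != 0) ->
  diag_mx (\row_i u i) \in unitmx.
Proof.
move=> u0; rewrite unitmxE det_diag unitfE; apply/prodf_neq0 => i _.
by rewrite mxE.
Qed.

Lemma rank_diag_mul n m (K : 'M[R]_(n,m)) (u : 'I_n -> R) (v : 'I_m -> R) :
  (forall i, u i != 0) -> (forall j, v j != 0) ->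
  \rank (diag_mx (\row_i u i) *m K *m diag_mx (\row_j v j)) = \rank K.
Proof.
move=> u0 v0; rewrite mxrankMfree; last by rewrite row_free_unit diag_unit.
apply/eqP; rewrite eqn_leq mxrankM_maxr /=.
have hU := @diag_unit _ _ u0.
rewrite -{1}(mulKmx hU K).
exact: mxrankM_maxr.
Qed.

Lemma sum_gt0 n (F : 'I_n -> R) : (0 < n)%N -> (forall i, 0 < F i) -> 0 < \sum_i F i.
Proof.
case: n F => // n F _ F0; rewrite big_ord_recl.
have := F0 ord0; have : 0 <= \sum_(i < n) F (lift ord0 i).
  by apply: sumr_ge0 => i _; apply/ltW.
lra.
Qed.

Lemma sinkhorn_pos n m (K : 'M[R]_(n,m)) a b N : (0 < n)%N -> (0 < m)%N ->
  (forall i j, 0 < K i j) -> (forall i, 0 < a i) -> (forall j, 0 < b j) ->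
  (forall i, 0 < (sinkhorn_scalings K a b N).1 i) /\
  (forall j, 0 < (sinkhorn_scalings K a b N).2 j).
Proof.
move=> n0 m0 K0 a0 b0; elim: N => [|N [IH1 IH2]] /=; first by split => ? /=.
rewrite /sinkhorn_step /=.
have hu : forall i, 0 < a i / \sum_(j < m) K i j * (sinkhorn_scalings K a b N).2 j.
  move=> i; apply: divr_gt0 => //; apply: sum_gt0 => // j; exact: mulr_gt0.
split => // j; apply: divr_gt0 => //; apply: sum_gt0 => // i; exact: mulr_gt0.
Qed.

Definition Mx {n' m'} (s : R) (x : 'I_n'.+1 * 'I_m'.+1 -> R) k : 'M[R]_k :=
  \matrix_(i < k, j < k) expR (s * x (inord i, inord j)).
Definition Ax {n' m'} (s : R) (x : 'I_n'.+1 * 'I_m'.+1 -> R) k : 'M[R]_k.+1 :=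
  \matrix_(i < k.+1, j < k.+1)
    if (i == ord_max) && (j == ord_max) then 0 else expR (s * x (inord i, inord j)).

Lemma det_rec n' m' s x k :
  \det (@Mx n' m' s x k.+1) = \det (Ax s x k) + expR (s * x (inord k, inord k)) * \det (Mx s x k).
Proof.
have cofE j : cofactor (Mx s x k.+1) ord_max j = cofactor (Ax s x k) ord_max j.
  rewrite /cofactor; congr (_ * \det _); apply/matrixP => i' j'; rewrite !mxE.
  by rewrite eq_sym (negbTE (neq_lift _ _)).
rewrite (expand_det_row _ ord_max) [\det (Ax _ _ _)](expand_det_row _ ord_max).
rewrite (bigD1 ord_max) // [X in _ = X + _](bigD1 ord_max) //=.
rewrite [Ax _ _ _ _ _]mxE eqxx mul0r add0r addrC; congr (_ + _).
  apply: eq_bigr => j hj; rewrite cofE; congr (_ * _); rewrite !mxE.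
  by rewrite (negbTE hj) andbF.
rewrite mxE; congr (_ * _).
rewrite /cofactor.
have -> : ((ord_max : 'I_k.+1) + (ord_max : 'I_k.+1))%N = (2 * k)%N by rewrite /= mul2n addnn.
rewrite exprM sqrrN !expr1n mul1r; congr (\det _).
apply/matrixP => i j; rewrite !mxE; by rewrite !lift_max.
Qed.

End LA.


Section Indep.
Context d (T : measurableType d) (R : realType) (P : probability T R)
  (I : finType) (X : I -> {RV P >-> R}) (Hind : mutually_independent X) (i0 : I).

Definition G0 : set (set T) := [set S | exists B : I -> set R,
  [/\ forall i, measurable (B i), B i0 = setT & S = [set w | forall i, B i (X i w)]]].

Lemma rect_meas (B : I -> set R) : (forall i, measurable (B i)) ->
  measurable [set w | forall i, B i (X i w)].
Proof.
move=> mB; rewrite (_ : [set w | _] = \bigcap_(i in setT) (X i @^-1` B i)).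
  by apply: fin_bigcap_measurable; [exact: finite_finset|move=> i _; exact: measurable_funPTI].
by apply/seteqP; split => w /= H i; [move=> _|]; apply: H.
Qed.

Lemma G0_meas : G0 `<=` measurable.
Proof. by move=> S [B [mB _ ->]]; exact: rect_meas. Qed.

Lemma gen_meas : <<s G0 >> `<=` measurable.
Proof. exact: smallest_sub (@sigma_algebra_measurable _ T) G0_meas. Qed.

Lemma Pfin {S : set T} : measurable S -> P S = (fine (P S))%:E.
Proof. by move=> mS; rewrite fineK // fin_num_measure. Qed.

Lemma compl_step (E S : set T) : measurable E -> measurable S ->
  P (E `&` S) = (P E * P S)%E -> P (E `&` ~` S) = (P E * P (~` S))%E.
Proof.
move=> mE mS hS.
have h1 : P (E `&` ~` S) = (P E - P (E `&` S))%E.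
  rewrite -setDE; apply: measureD => //.
  by apply: (le_lt_trans (probability_le1 _ mE)); exact: ltry.
have h2 : P (~` S) = (1 - P S)%E by apply: probability_setC.
rewrite h1 h2 hS (Pfin mE) (Pfin mS) -EFinM -!EFinB -EFinM; congr EFin; ring.
Qed.

Lemma union_step (E : set T) (F : (set T)^nat) : measurable E ->
  (forall n, measurable (F n)) -> trivIset setT F ->
  (forall n, P (E `&` F n) = (P E * P (F n))%E) ->
  P (E `&` \bigcup_n F n) = (P E * P (\bigcup_n F n))%E.
Proof.
move=> mE mF tF hF.
have h1 : P (E `&` \bigcup_n F n) = (\sum_(n <oo) P (E `&` F n))%E.
  rewrite setI_bigcupr; apply: measure_semi_bigcup.
  + by move=> n; apply: measurableI.
  + exact: trivIset_setIl.
  + by apply: bigcupT_measurable => n; apply: measurableI.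
have h2 : P (\bigcup_n F n) = (\sum_(n <oo) P (F n))%E.
  by apply: measure_semi_bigcup => //; apply: bigcupT_measurable.
rewrite h1 h2 (@eq_eseriesr _ _ (fun n => (P E * P (F n))%E)); last by move=> n _.
by rewrite (Pfin mE) nneseriesZl.
Qed.

Lemma indep_gen (A : set R) : measurable A -> forall S, <<s G0 >> S ->
  P (X i0 @^-1` A `&` S) = (P (X i0 @^-1` A) * P S)%E.
Proof.
move=> mA.
have mXA : measurable (X i0 @^-1` A) by exact: measurable_funPTI.
pose T' := g_sigma_algebraType G0.
suff H : forall S : set T', <<s G0 >> S -> @measurable _ T S /\
   P (X i0 @^-1` A `&` S) = (P (X i0 @^-1` A) * P S)%E.
  by move=> S /H [].
apply: (@dynkin_induction _ T' G0
  (fun S => @measurable _ T S /\ P (X i0 @^-1` A `&` S) = (P (X i0 @^-1` A) * P S)%E) erefl).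
- move=> S1 S2 [B1 [mB1 h1 ->]] [B2 [mB2 h2 ->]].
  exists (fun i => B1 i `&` B2 i); split.
  + by move=> i; apply: measurableI.
  + by rewrite h1 h2 setTI.
  + by apply/seteqP; split => w /= H; [case: H => H1 H2 i; split; [exact: H1|exact: H2]|split => i; have [] := H i].
- by split => //; rewrite setIT probability_setT mule1.
- move=> S [B [mB hB ->]]; split; first exact: rect_meas.
  pose B' := fun i => if i == i0 then A else B i.
  have mB' : forall i, measurable (B' i).
    by move=> i; rewrite /B'; case: ifP.
  have -> : X i0 @^-1` A `&` [set w | forall i, B i (X i w)] = [set w | forall i, B' i (X i w)].
    apply/seteqP; split => w /=.
      by move=> [HA HB] i; rewrite /B'; case: eqP => [->|_]; [exact: HA|exact: HB].
    move=> H; split; first by have := H i0; rewrite /B' eqxx.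
    move=> i; have := H i; rewrite /B'; case: eqP => [->|//]; by rewrite hB.
  rewrite !Hind //.
  rewrite (bigD1 i0) // [X in _ = (_ * X%:E)%E](bigD1 i0) //=.
  rewrite /B' eqxx hB preimage_setT probability_setT /= mul1r.
  rewrite (@eq_bigr _ _ _ _ _ _ _ (fun i => fine (P (X i @^-1` B i)))); last first.
    by move=> i /negbTE ->.
  by rewrite EFinM; congr (_ * _)%E; apply/esym/Pfin; exact: measurable_funPTI.
- move=> S _ [mS hS]; split; first exact: measurableC.
  exact: compl_step.
- move=> F _ tF hF; split; first by apply: bigcupT_measurable => n; exact: (hF n).1.
  apply: union_step => // n; [exact: (hF n).1|exact: (hF n).2].
Qed.




Lemma unif_le (U : set R) : measurable U ->
  (uniform_prob (@ltr01 R) U <= lebesgue_measure U)%E.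
Proof.
move=> mU; rewrite /uniform_prob.
apply: le_trans (_ : (\int[lebesgue_measure]_(x in U) (cst 1%E x) <= _)%E).
  apply: ge0_le_integral => //.
  - by move=> x Ux; rewrite lee_fin uniform_pdf_ge0.
  - by apply/measurable_EFinP/measurable_funTS; exact: measurable_uniform_pdf.
  - by move=> x Ux; rewrite /= lee_fin /uniform_pdf /=; case: ifPn; rewrite ?subr0 ?invr1.
by rewrite integral_cst // mul1e.
Qed.

Lemma unif_neg : uniform_prob (@ltr01 R) `]-oo, 0[ = 0%E.
Proof.
rewrite /uniform_prob integral_uniform_pdf.
rewrite (_ : _ `&` _ = set0) ?integral_set0 //.
apply/seteqP; split => x //= []; rewrite !in_itv /=; lra.
Qed.

Definition Ik (e : R) (k : nat) : set R := `[k%:R * e, k.+1%:R * e[.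

Lemma Ik_meas e k : measurable (Ik e k).
Proof. exact: measurable_itv. Qed.

Lemma Ik_disj e i j y : 0 < e -> Ik e i y -> Ik e j y -> i = j.
Proof.
rewrite /Ik /= !in_itv /= => e0 /andP[h1 h2] /andP[h3 h4].
have a1 : (i < j.+1)%N.
  by rewrite -(ltr_nat R) -(ltr_pM2r e0); apply: le_lt_trans h4.
have a2 : (j < i.+1)%N.
  by rewrite -(ltr_nat R) -(ltr_pM2r e0); apply: le_lt_trans h2.
by apply/eqP; rewrite ltnS in a1; rewrite ltnS in a2; rewrite eqn_leq a1 a2.
Qed.

Lemma Ik_len e k : 0 < e -> (lebesgue_measure (Ik e k) <= e%:E)%E.
Proof.
move=> e0; rewrite /Ik lebesgue_measure_itv /=.
case: ifP => _; last by rewrite lee_fin ltW.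
rewrite -EFinB lee_fin.
have -> : k.+1%:R * e - k%:R * e = e by rewrite -addn1 natrD; ring.
by [].
Qed.

Lemma Ik_cover e y : 0 < e -> 0 <= y -> exists k, Ik e k y.
Proof.
move=> e0 y0; exists (Num.Def.trunc (y / e)); rewrite /Ik /= in_itv /=.
have := trunc_itv (divr_ge0 y0 (ltW e0)).
by rewrite ler_pdivlMr // ltr_pdivrMr.
Qed.

Lemma eq_null (V : T -> R) : uniform01 (X i0) ->
  (forall B, measurable B -> <<s G0 >> (V @^-1` B)) ->
  P.-negligible [set w | X i0 w = V w].
Proof.
move=> hU hV.
have mV : measurable_fun setT V by move=> _ B mB; rewrite setTI; exact: gen_meas (hV B mB).
have hX : forall A, measurable A -> P (X i0 @^-1` A) = uniform_prob (@ltr01 R) A.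
  by move=> A mA; exact: hU A mA.
set E := [set w | X i0 w = V w].
have mE : measurable E.
  rewrite (_ : E = (fun w => X i0 w - V w) @^-1` [set 0]).
    have := measurable_funB (@measurable_funP _ _ _ _ setT (X i0)) mV measurableT (measurable_set1 0).
    by rewrite setTI.
  apply/seteqP; split => w /=; first by move=> ->; rewrite subrr.
  by move/eqP; rewrite subr_eq0 => /eqP.
have key : forall e, 0 < e -> (P E <= e%:E)%E.
  move=> e e0.
  pose N := X i0 @^-1` `]-oo, 0[.
  have mVk k : measurable (V @^-1` Ik e k).
    by rewrite -[_ @^-1` _]setTI; apply: mV => //; exact: Ik_meas.
  pose F := fun k => X i0 @^-1` Ik e k `&` V @^-1` Ik e k.
  have mN : measurable N by apply: measurable_funPTI; exact: measurable_itv.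
  have mF : forall k, measurable (F k).
    by move=> k; apply: measurableI => //; apply: measurable_funPTI; exact: Ik_meas.
  have sub : E `<=` N `|` \bigcup_k F k.
    move=> w /= Ew; case: (ltP (X i0 w) 0) => h.
      by left; rewrite /N /= in_itv.
    right; have [k hk] := @Ik_cover e (X i0 w) e0 h; exists k => //; split => //.
    by rewrite /= -Ew.
  have tV : trivIset setT (fun k => V @^-1` Ik e k).
    by move=> i j _ _ [w [hi hj]]; exact: (@Ik_disj e i j (V w) e0 hi hj).
  have PN : P N = 0%E by rewrite /N hX ?unif_neg //; exact: measurable_itv.
  have hUF : P (\bigcup_k F k) = (\sum_(k <oo) P (F k))%E.
    apply: measure_semi_bigcup => //; [exact: trivIset_setIl|exact: bigcupT_measurable].
  have hUV : P (\bigcup_k V @^-1` Ik e k) = (\sum_(k <oo) P (V @^-1` Ik e k))%E.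
    by apply: measure_semi_bigcup => //; exact: bigcupT_measurable.
  have hFk k : P (F k) = (P (X i0 @^-1` Ik e k) * P (V @^-1` Ik e k))%E.
    by apply: indep_gen; [exact: Ik_meas|apply: hV; exact: Ik_meas].
  have hXk k : (P (X i0 @^-1` Ik e k) <= e%:E)%E.
    rewrite hX; last exact: Ik_meas.
    have h1 := unif_le _ (Ik_meas e k); have h2 := @Ik_len e k e0.
    exact: (le_trans h1 h2).
  have mU : measurable (N `|` \bigcup_k F k) by apply: measurableU => //; exact: bigcupT_measurable.
  apply: (@le_trans _ _ (P (N `|` \bigcup_k F k))).
    by apply: le_measure => //; apply: mem_set.
  apply: (@le_trans _ _ (P N + P (\bigcup_k F k))%E).
    by apply: measureU2 => //; exact: bigcupT_measurable.
  rewrite PN add0e hUF.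
  apply: le_trans (_ : (\sum_(k <oo) (e%:E * P (V @^-1` Ik e k)) <= _)%E).
    apply: lee_nneseries => k _; first by move=> _; exact: measure_ge0.
    by rewrite hFk; apply: lee_wpmul2r => //; exact: measure_ge0.
  rewrite nneseriesZl; last by move=> k _; exact: measure_ge0.
  rewrite -hUV.
  rewrite -[X in (_ <= X)%E]mule1; apply: lee_wpmul2l; first by rewrite lee_fin ltW.
  by apply: probability_le1; exact: bigcupT_measurable.
exists E; split => //.
apply/eqP; rewrite eq_le measure_ge0 andbT.
rewrite (Pfin mE) lee_fin; apply/ler_addgt0Pr => e e0; rewrite add0r.
by have := key e e0; rewrite (Pfin mE) lee_fin.
Qed.
End Indep.


Lemma meas_det d (T1 : measurableType d) (R : realType) q (F : T1 -> 'M[R]_q) :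
  (forall i j, measurable_fun setT (fun w => F w i j)) ->
  measurable_fun setT (fun w => \det (F w)).
Proof.
move=> hF; rewrite /determinant.
apply: measurable_sum => s.
apply: measurable_funM; first exact: measurable_cst.
by apply: measurable_prod => i _; exact: hF.
Qed.

Lemma rank_of_minor (R : realType) n' m' (K : 'M[R]_(n'.+1, m'.+1)) (s : R) x :
  (forall i j, K i j = expR (s * x (i, j))) ->
  \det (Mx s x (minn n'.+1 m'.+1)) != 0 -> \rank K = minn n'.+1 m'.+1.
Proof.
move=> hK hD; apply/eqP; rewrite eqn_leq leq_min rank_leq_row rank_leq_col /=.
apply: (@leq_trans (\rank (Mx s x (minn n'.+1 m'.+1)))).
  by rewrite mxrank_unit // unitmxE unitfE.
have -> : Mx s x (minn n'.+1 m'.+1) =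
   rowsub (fun i : 'I_(minn n'.+1 m'.+1) => inord i)
     (colsub (fun j : 'I_(minn n'.+1 m'.+1) => inord j) K).
  by apply/matrixP => i j; rewrite !mxE hK.
exact: rank_sub_le.
Qed.

Section Main.
Context d (T : measurableType d) (R : realType) (P : probability T R) (n' m' : nat)
  (C : 'I_n'.+1 * 'I_m'.+1 -> {RV P >-> R})
  (Cunif : forall ij, uniform01 (C ij))
  (Cindep : mutually_independent C).

Definition xw (w : T) := fun ij => C ij w.

Lemma ind_neq k (i j : 'I_k.+1) : (k <= n')%N -> (k <= m')%N ->
  ~~ ((i == ord_max) && (j == ord_max)) ->
  ((inord i, inord j) : 'I_n'.+1 * 'I_m'.+1) != (inord k, inord k).
Proof.
move=> kn km hij; apply/negP => /eqP [hi hj]; move/negP: hij; apply.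
have ri : (i : nat) = k.
  have := congr1 (@nat_of_ord _) hi; rewrite !inordK //.
  exact: leq_trans (ltnSE (ltn_ord i)) kn.
have rj : (j : nat) = k.
  have := congr1 (@nat_of_ord _) hj; rewrite !inordK //.
  exact: leq_trans (ltnSE (ltn_ord j)) km.
by apply/andP; split; apply/eqP/val_inj.
Qed.

Lemma coord_meas (i0 ij : 'I_n'.+1 * 'I_m'.+1) : ij != i0 ->
  measurable_fun (T := g_sigma_algebraType (@G0 _ _ _ P _ C i0)) setT (fun w => C ij w).
Proof.
move=> hij _ B mB; rewrite setTI; apply: sub_sigma_algebra.
exists (fun i => if i == ij then B else setT); split.
- by move=> i; case: ifP.
- by rewrite eq_sym (negbTE hij).
- apply/seteqP; split => w /=.
    by move=> h i; case: ifP => // /eqP ->.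
  by move=> h; have := h ij; rewrite eqxx.
Qed.


Lemma det_negl (s : R) (hs : s * s = 1) k : (k <= n'.+1)%N -> (k <= m'.+1)%N ->
  P.-negligible [set w | \det (Mx s (xw w) k) = 0].
Proof.
elim: k => [_ _|k IH hkn hkm].
  apply: (negligibleS _ (negligible_set0 P)) => w /=.
  by rewrite det_mx00 => /eqP; rewrite oner_eq0.
have kn : (k <= n')%N by [].
have km : (k <= m')%N by [].
have IH' := IH (leqW kn) (leqW km).
pose i0 : 'I_n'.+1 * 'I_m'.+1 := (inord k, inord k).
pose T' := g_sigma_algebraType (@G0 _ _ _ P _ C i0).
pose V := fun w : T => s * (ln `|\det (Ax s (xw w) k)| - ln `|\det (Mx s (xw w) k)|).
have mA : measurable_fun (T := T') setT (fun w => \det (Ax s (xw w) k)).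
  apply: meas_det => i j.
  have -> : (fun w : T' => Ax s (xw w) k i j) = (fun w =>
     if (i == ord_max) && (j == ord_max) then 0 else expR (s * C (inord i, inord j) w)).
    by apply/funext => w; rewrite mxE.
  case hij : ((i == ord_max) && (j == ord_max)); first exact: measurable_cst.
  have mc : measurable_fun (T := T') setT (fun w => s * C (inord i, inord j) w).
    apply: measurable_funM; first exact: measurable_cst.
    by apply: coord_meas; apply: ind_neq => //; rewrite hij.
  exact: (measurableT_comp (@measurable_expR R) mc).
have mM : measurable_fun (T := T') setT (fun w => \det (Mx s (xw w) k)).
  apply: meas_det => i j.
  have -> : (fun w : T' => Mx s (xw w) k i j) = (fun w => expR (s * C (inord i, inord j) w)).
    by apply/funext => w; rewrite mxE.
  have mc : measurable_fun (T := T') setT (fun w => s * C (inord i, inord j) w).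
    apply: measurable_funM; first exact: measurable_cst.
    apply: coord_meas; apply/negP => /eqP [hi _].
    have := congr1 (@nat_of_ord _) hi; rewrite !inordK //; last first.
      exact: leq_trans (ltnW (ltn_ord i)) kn.
    by move=> hik; have := ltn_ord i; rewrite hik ltnn.
  exact: (measurableT_comp (@measurable_expR R) mc).
have mVT' : measurable_fun (T := T') setT V.
  apply: measurable_funM; first exact: measurable_cst.
  apply: measurable_funB.
    exact: (measurableT_comp (@measurable_ln R) (measurableT_comp (@normr_measurable R setT) mA)).
  exact: (measurableT_comp (@measurable_ln R) (measurableT_comp (@normr_measurable R setT) mM)).
have hV : forall B, measurable B -> <<s @G0 _ _ _ P _ C i0 >> (V @^-1` B).
  by move=> B mB; have := mVT' measurableT B mB; rewrite setTI.
have hE := @eq_null _ _ _ P _ C Cindep i0 V (Cunif i0) hV.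
apply: negligibleS (negligibleU IH' hE).
move=> w /= h0; rewrite det_rec in h0.
case: (eqVneq (\det (Mx s (xw w) k)) 0) => hD; [by left|right].
set X := C i0 w.
have hX : xw w (inord k, inord k) = X by [].
rewrite hX in h0.
have hA : `|\det (Ax s (xw w) k)| = expR (s * X) * `|\det (Mx s (xw w) k)|.
  have -> : \det (Ax s (xw w) k) = - (expR (s * X) * \det (Mx s (xw w) k)).
    by apply/eqP; rewrite -addr_eq0 h0.
  by rewrite normrN normrM ger0_norm // expR_ge0.
rewrite /V hA lnM ?posrE ?expR_gt0 ?normr_gt0 // expRK.
by rewrite addrK mulrA hs mul1r.
Qed.
End Main.

Theorem proposition7 (d : measure_display) (T : measurableType d)
  (R : realType) (P : probability T R) (n m : nat)
  (C : 'I_n * 'I_m -> {RV P >-> R})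
  (Cunif : forall ij, uniform01 (C ij))
  (Cindep : mutually_independent C)
  (a : 'I_n -> R) (b : 'I_m -> R)
  (ha : in_simplex a) (hb : in_simplex b)
  (ha0 : forall i, 0 < a i) (hb0 : forall j, 0 < b j) :
  {ae P, forall w : T,
    let Cw : 'M[R]_(n, m) := \matrix_(i, j) C (i, j) w in
    [/\ \rank (mx_exp Cw) = minn n m,
        \rank (mx_exp (- Cw)) = minn n m &
        forall N : nat, \rank (sinkhorn (mx_exp (- Cw)) a b N) = minn n m]}.
Proof.
case: n C Cunif Cindep a ha ha0 => [|n'] C Cunif Cindep a ha ha0.
  by apply: nearW => w /=; rewrite min0n; split => [||N]; apply/eqP; rewrite -leqn0; exact: rank_leq_row.
case: m C Cunif Cindep b hb hb0 => [|m'] C Cunif Cindep b hb hb0.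
  by apply: nearW => w /=; rewrite minn0; split => [||N]; apply/eqP; rewrite -leqn0; exact: rank_leq_col.
have p1 : (minn n'.+1 m'.+1 <= n'.+1)%N := geq_minl _ _.
have p2 : (minn n'.+1 m'.+1 <= m'.+1)%N := geq_minr _ _.
have H1 := @det_negl _ _ _ P n' m' C Cunif Cindep 1 (mulr1 1) _ p1 p2.
have hs : (-1 : R) * -1 = 1 by rewrite mulN1r opprK.
have H2 := @det_negl _ _ _ P n' m' C Cunif Cindep (-1) hs _ p1 p2.
apply: (negligibleS _ (negligibleU H1 H2)) => w /= hw.
apply: contrapT => hn; apply: hw; case/not_orP: hn => h1 h2.
have r1 : \rank (mx_exp (\matrix_(i, j) C (i, j) w)) = minn n'.+1 m'.+1.
  apply: (@rank_of_minor R n' m' _ 1 (fun ij => C ij w)); last by apply/eqP.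
  by move=> i j; rewrite /mx_exp !mxE mul1r.
have r2 : \rank (mx_exp (- \matrix_(i, j) C (i, j) w)) = minn n'.+1 m'.+1.
  apply: (@rank_of_minor R n' m' _ (-1) (fun ij => C ij w)); last by apply/eqP.
  by move=> i j; rewrite /mx_exp !mxE mulN1r.
split => // N.
have [hu hv] := @sinkhorn_pos R _ _ (mx_exp (- \matrix_(i, j) C (i, j) w)) a b N
  (ltn0Sn _) (ltn0Sn _) (fun i j => ltac:(by rewrite /mx_exp mxE expR_gt0)) ha0 hb0.
rewrite /sinkhorn /= rank_diag_mul // => [i|j]; exact: lt0r_neq0.
Qed.
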